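(* Let $\mathcal F$ be a compact subset of $C(\mathbf X)$. There exists a strategy for Predictor that produces predictions with $|\mu_n|\le1$ and guarantees, for all $N=1,2,\dots$, all $F\in\mathcal F$ and all moves of Reality, $$\sum_{n=1}^N(y_n-\mu_n)^2\le\sum_{n=1}^N(y_n-F(x_n))^2+C\inf_{\epsilon\in(0,1/2]}\left(\mathcal H_\epsilon(\mathcal F)+\log\log\frac1\epsilon+\epsilon N+1\right),$$ where $C$ is a universal constant.
   Context: Protocol: $\mathbf X$ is a nonempty topological space (the signal space). At each round $n=1,2,\dots$ Reality announces $x_n\in\mathbf X$, Predictor announces $\mu_n\in\mathbb R$, Reality announces $y_n\in[-1,1]$. A strategy for Predictor maps each history $(x_1,y_1,\dots,x_{n-1},y_{n-1},x_n)$ to $\mu_n$; guarantees must hold for all (possibly adaptive) moves of Reality. $C(\mathbf X)$ is the Banach space of bounded continuous real-valued functions on $\mathbf X$ with the supremum norm. For a totally bounded subset $A$ of a metric space, the metric entropy $\mathcal H_\epsilon(A)$ is $\log_2$ of the minimal number $k$ of points $F_1,\dots,F_k\in A$ such that every point of $A$ is within distance $\epsilon$ of some $F_i$ (here the metric is that of $C(\mathbf X)$). $\log$ denotes $\log_2$. *)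

(* Defs.v *)
From HB Require Import structures.
From mathcomp Require Import all_boot all_order all_algebra.
From mathcomp Require Import all_classical all_reals all_analysis.
Set Implicit Arguments. Unset Strict Implicit. Unset Printing Implicit Defensive.
Import Order.TTheory GRing.Theory Num.Theory.
Import numFieldNormedType.Exports.
Local Open Scope classical_set_scope.
Local Open Scope ring_scope.

Definition log2 {R : realType} (x : R) : R := ln x / ln 2.

Definition bcont {R : realType} {X : topologicalType} (f : X -> R) : Prop :=
  continuous f /\ exists M : R, forall x, `|f x| <= M.

(* distance in C(X) (sup norm) at most eps, written out pointwise *)
Definition within_dist {R : realType} {X : topologicalType}
  (f g : X -> R) (eps : R) : Prop := forall x, `|f x - g x| <= eps.

Definition eps_net {R : realType} {X : topologicalType}
  (A : set (X -> R)) (eps : R) (s : seq (X -> R)) : Prop :=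
  (forall g, g \in s -> A g) /\
  (forall f, A f -> exists2 g, g \in s & within_dist f g eps).

Definition covering_number {R : realType} {X : topologicalType}
  (A : set (X -> R)) (eps : R) : R :=
  inf [set (size s)%:R | s in eps_net A eps].

Definition metric_entropy {R : realType} {X : topologicalType}
  (A : set (X -> R)) (eps : R) : R := log2 (covering_number A eps).

(* A Predictor strategy: maps the history ((x_1,y_1),...,(x_{n-1},y_{n-1}))
   and the current signal x_n to the prediction mu_n. *)
Definition strategy (R : realType) (X : topologicalType) : Type :=
  seq (X * R) -> X -> R.

(* the history of the first n rounds (0-indexed sequences) *)
Definition history {R : realType} {X : topologicalType}
  (xs : nat -> X) (ys : nat -> R) (n : nat) : seq (X * R) :=
  [seq (xs j, ys j) | j <- iota 0 n].

Definition prediction {R : realType} {X : topologicalType} (S : strategy R X)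
  (xs : nat -> X) (ys : nat -> R) (n : nat) : R :=
  S (history xs ys n) (xs n).

Definition entropy_bound {R : realType} {X : topologicalType}
  (A : set (X -> R)) (N : nat) : R :=
  inf [set metric_entropy A eps + log2 (log2 eps^-1) + eps * N%:R + 1
      | eps in `]0, 2^-1]%classic].

(* Main.v *)
Require Import Defs.
From HB Require Import structures.
From mathcomp Require Import all_boot all_order all_algebra.
From mathcomp Require Import all_classical all_reals all_analysis.
From mathcomp Require Import ring lra.
Import Order.TTheory GRing.Theory Num.Theory.
Import numFieldNormedType.Exports.
Local Open Scope classical_set_scope.
Local Open Scope ring_scope.
Section Key.
Variable R : realType.
Definition eta : R := 32^-1.

Lemma expR_le_inv (s : R) : s < 1 -> expR s <= (1 - s)^-1.
Proof.
move=> hs.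
have h1 := expR_ge1Dx (- s).
have hp : 0 < 1 - s by lra.
rewrite -[s]opprK expRN lef_pV2 ?posrE ?expR_gt0 //; lra.
Qed.

Lemma key_pt (y b m : R) : -1 <= y <= 1 -> -1 <= b <= 1 -> -1 <= m <= 1 ->
  expR (- eta * (y - b) ^+ 2) <=
  expR (- eta * (y - m) ^+ 2) * (1 + 2 * eta * (y - m) * (b - m)).
Proof.
move=> /andP[y1 y2] /andP[b1 b2] /andP[m1 m2].
have -> : - eta * (y - b) ^+ 2 = - eta * (y - m) ^+ 2 +
   ((y - m) * (b - m) / 16 - (b - m) ^+ 2 / 32).
  by rewrite /eta; field.
have -> : 2 * eta * (y - m) * (b - m) = (y - m) * (b - m) / 16.
  by rewrite /eta; field.
rewrite expRD ler_pM2l ?expR_gt0 //.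
set u := y - m; set d := b - m.
have hu1 : -2 <= u <= 2 by rewrite /u; apply/andP; split; lra.
have hd1 : -2 <= d <= 2 by rewrite /d; apply/andP; split; lra.
case/andP: hu1 => hu1 hu2; case/andP: hd1 => hd1 hd2.
have hs : u * d / 16 - d ^+ 2 / 32 < 1 by nra.
have hE := @expR_le_inv _ hs. apply: (le_trans hE).
have hp : 0 < 1 - (u * d / 16 - d ^+ 2 / 32) by lra.
rewrite -[X in X <= _]mul1r ler_pdivrMr //.
have hud : u * d <= 4 by nra.
have hud2 : -4 <= u * d by nra.
have huu : u ^+ 2 <= 4 by nra.
nra.
Qed.
End Key.
Definition ufun (R : realType) (X : topologicalType) := {uniform X -> R}.
HB.instance Definition _ (R : realType) (X : topologicalType) := Uniform.on (ufun R X).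
HB.instance Definition _ (R : realType) (X : topologicalType) := isPointed.Build (ufun R X) (fun _ => 0).

Lemma net_exists (R : realType) (X : topologicalType) (FF : set (X -> R)) :
  compact (FF : set {uniform X -> R}) -> forall e : R, 0 < e ->
  exists s, eps_net FF e s.
Proof.
move=> cpt e e0.
have cc : cover_compact (FF : set (ufun R X)) by rewrite -compact_cover; exact: cpt.
pose f (g : ufun R X) : set (ufun R X) :=
  interior [set h : ufun R X | forall x, `|g x - h x| < e].
have h1 : forall i, FF i -> open (f i) by move=> i _; exact: open_interior.
have h2 : FF `<=` cover FF f.
  move=> g FFg; exists g => //.
  rewrite /f /interior /=. 
  apply/uniform_nbhs; exists [set xy | ball xy.1 (PosNum e0)%:num xy.2].
  split; first exact: entourage_ball.
  move=> h /= hh x; have := hh x I.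
  by rewrite -ball_normE /=.
have [D' D'sub cov] := cc _ FF f h1 h2.
exists (finmap.enum_fset D'); split.
- move=> g; move=> gD; have := D'sub _ gD; by rewrite inE.
- move=> g FFg; have [i iD fi] := cov _ FFg.
  exists i => //.
  move=> x; rewrite distrC; apply: ltW.
  exact: (interior_subset fi).
Qed.

Lemma net_mono (R : realType) (X : topologicalType) (FF : set (X -> R)) (e e' : R) (s : seq (X -> R)) :
  eps_net FF e s -> e <= e' -> eps_net FF e' s.
Proof.
move=> [h1 h2] ee; split=> // f /h2 [g gs fg]; exists g => // x.
exact: le_trans (fg x) ee.
Qed.

Lemma min_net (R : realType) (X : topologicalType) (FF : set (X -> R)) :
  compact (FF : set {uniform X -> R}) -> forall e : R, 0 < e ->
  exists s, eps_net FF e s /\ forall s', eps_net FF e s' -> (size s <= size s')%N.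
Proof.
move=> cpt e e0.
pose P n := `[< exists s, eps_net FF e s /\ size s = n >].
have exP : exists n, P n.
  have [s hs] := @net_exists _ _ _ cpt _ e0; exists (size s); apply/asboolP; by exists s.
case: (ex_minnP exP) => n /asboolP [s [hs <-]] hmin.
exists s; split => // s' hs'; apply: hmin; apply/asboolP; by exists s'.
Qed.

Lemma cov_ge (R : realType) (X : topologicalType) (FF : set (X -> R)) (e e' : R) (s : seq (X -> R)) :
  compact (FF : set {uniform X -> R}) -> 0 < e -> e <= e' ->
  (forall s', eps_net FF e' s' -> (size s <= size s')%N) ->
  (size s)%:R <= covering_number FF e.
Proof.
move=> cpt e0 ee hmin.
apply: lb_le_inf.
  have [s' hs'] := @net_exists _ _ _ cpt _ e0; by exists (size s')%:R, s'.
move=> _ [s' hs' <-]; rewrite ler_nat; apply: hmin; exact: net_mono hs' ee.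
Qed.

Lemma nested_ge (R : realType) (f : nat -> nat -> R) (m : nat -> nat) a b k i :
  (forall k i, 0 <= f k i) -> (a <= k < b)%N -> (i < m k)%N ->
  f k i <= \sum_(a <= k' < b) \sum_(0 <= i' < m k') f k' i'.
Proof.
move=> f0 hk hi.
have h1 : f k i <= \sum_(0 <= i' < m k) f k i'.
  rewrite (bigD1_seq i) ?mem_index_iota ?iota_uniq //=.
  by rewrite lerDl sumr_ge0.
apply: (le_trans h1).
rewrite [X in _ <= X](bigD1_seq k) ?mem_index_iota ?iota_uniq //=.
rewrite lerDl sumr_ge0 // => k' _; apply: sumr_ge0 => i' _; exact: f0.
Qed.

Lemma sum2_lin (R : realType) (f g : nat -> nat -> R) (m : nat -> nat) (al be : R) a b :
  \sum_(a <= k < b) \sum_(0 <= i < m k) (al * f k i + be * g k i) =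
  al * \sum_(a <= k < b) \sum_(0 <= i < m k) f k i +
  be * \sum_(a <= k < b) \sum_(0 <= i < m k) g k i.
Proof.
rewrite !mulr_sumr -big_split; apply: eq_bigr => k _.
by rewrite !mulr_sumr -big_split.
Qed.

Section Alg.
Variables (R : realType) (X : topologicalType) (net : nat -> seq (X -> R)).

Definition clip (t : R) : R := if t < -1 then -1 else if 1 < t then 1 else t.
Definition act (n k : nat) : bool := (1 <= k <= 2 ^ n)%N.
Definition prior (k : nat) : R := ((k * k.+1)%:R * (size (net k))%:R)^-1.
Definition ae (k i : nat) (x : X) : R := clip (nth (fun _ => 0) (net k) i x).
Definition wt (V : nat -> nat -> R) k i : R := prior k * expR (- eta R * V k i).
Definition Wsum V n : R := \sum_(1 <= k < (2 ^ n).+1) \sum_(0 <= i < size (net k)) wt V k i.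
Definition Asum V n x : R :=
  \sum_(1 <= k < (2 ^ n).+1) \sum_(0 <= i < size (net k)) wt V k i * ae k i x.
Definition predict V n x : R := Asum V n x / Wsum V n.
Definition upd V n (p : X * R) : nat -> nat -> R := fun k i =>
  V k i + (if act n k then (p.2 - ae k i p.1) ^+ 2 else (p.2 - predict V n p.1) ^+ 2).
Definition step (st : (nat -> nat -> R) * nat) (p : X * R) :=
  (upd st.1 st.2 p, st.2.+1).
Definition strat : strategy R X := fun h x =>
  let st := foldl step ((fun _ _ => 0), 0%N) h in predict st.1 st.2 x.

Variables (xs : nat -> X) (ys : nat -> R).
Fixpoint Vrec (n : nat) : nat -> nat -> R :=
  match n with 0 => fun _ _ => 0 | n'.+1 => upd (Vrec n') n' (xs n', ys n') end.

Lemma fold_hist n : foldl step ((fun _ _ => 0), 0%N) (history xs ys n) = (Vrec n, n).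
Proof.
elim: n => [//|n IH].
rewrite /history -addn1 iotaD map_cat foldl_cat -/(history xs ys n) IH add0n addn1. by [].
Qed.

Lemma pred_eq n : prediction strat xs ys n = predict (Vrec n) n (xs n).
Proof. by rewrite /prediction /strat fold_hist. Qed.

Lemma clip_bd t : -1 <= clip t <= 1.
Proof.
rewrite /clip; case: ifP => h1; first by apply/andP; split; lra.
case: ifP => h2; first by apply/andP; split; lra.
by apply/andP; split; rewrite leNgt ?h1 ?h2.
Qed.

Lemma clip_lip s t : `|clip s - clip t| <= `|s - t|.
Proof.
have a1 := ler_norm (s - t).
have a2 : t - s <= `|s - t| by rewrite distrC ler_norm.
rewrite /clip; case: (ltP s (-1)) => h1; case: (ltP 1 s) => h2;
  case: (ltP t (-1)) => h3; case: (ltP 1 t) => h4;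
  rewrite /= ler_norml; apply/andP; split; lra.
Qed.

Lemma clip_loss y t : -1 <= y <= 1 -> (y - clip t) ^+ 2 <= (y - t) ^+ 2.
Proof.
move=> /andP[y1 y2]; rewrite /clip.
case: (ltP t (-1)) => h1 /=; first nra.
case: (ltP 1 t) => h2 /=; nra.
Qed.

Lemma ae_bd k i x : -1 <= ae k i x <= 1.
Proof. exact: clip_bd. Qed.

Lemma prior_ge0 k : 0 <= prior k.
Proof. by rewrite /prior invr_ge0 mulr_ge0 // ler0n. Qed.

Lemma wt_ge0 V k i : 0 <= wt V k i.
Proof. by rewrite /wt mulr_ge0 ?prior_ge0 // expR_ge0. Qed.

Lemma Wsum_ge0 V n : 0 <= Wsum V n.
Proof. by apply: sumr_ge0 => k _; apply: sumr_ge0 => i _; exact: wt_ge0. Qed.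

Lemma Asum_le V n x : `|Asum V n x| <= Wsum V n.
Proof.
apply: (le_trans (ler_norm_sum _ _ _)); apply: ler_sum => k _.
apply: (le_trans (ler_norm_sum _ _ _)); apply: ler_sum => i _.
rewrite normrM ger0_norm ?wt_ge0 //.
rewrite -[X in _ <= X]mulr1 ler_wpM2l ?wt_ge0 //.
have /andP[h1 h2] := ae_bd k i x; rewrite ler_norml; apply/andP; split => //.
Qed.

Lemma predict_bd V n x : -1 <= predict V n x <= 1.
Proof.
rewrite -ler_norml /predict.
have hW := Wsum_ge0 V n; have hA := Asum_le V n x.
have [->|hW0] := eqVneq (Wsum V n) 0; first by rewrite invr0 mulr0 normr0.
have hWp : 0 < Wsum V n by rewrite lt_def hW0 hW.
by rewrite normrM normfV (ger0_norm hW) ler_pdivrMr // mul1r.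
Qed.

Lemma prior_gt0 k : (0 < k)%N -> (0 < size (net k))%N -> 0 < prior k.
Proof.
move=> hk hm; rewrite /prior invr_gt0 mulr_gt0 // ltr0n //.
by rewrite muln_gt0 hk.
Qed.

Lemma Wsum_gt0 V n : (forall k, (0 < size (net k))%N) -> 0 < Wsum V n.
Proof.
move=> hnet.
have h : 0 < wt V 1 0 by rewrite /wt mulr_gt0 ?prior_gt0 ?expR_gt0.
apply: (lt_le_trans h); apply: (@nested_ge R (wt V) (fun k => size (net k))).
- exact: wt_ge0.
- by rewrite /= ltnS expn_gt0.
- exact: hnet.
Qed.

Definition mu n := predict (Vrec n) n (xs n).
Definition Psi n K := \sum_(1 <= k < K.+1) \sum_(0 <= i < size (net k)) wt (Vrec n) k i.
Definition Lhat n := \sum_(j < n) (ys j - mu j) ^+ 2.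

Lemma tele K : \sum_(1 <= k < K.+1) ((k * k.+1)%:R)^-1 = 1 - (K.+1)%:R^-1 :> R.
Proof.
elim: K => [|K IH]; first by rewrite big_geq // invr1 subrr.
rewrite big_nat_recr //= IH.
have h1 : (K.+1)%:R = K%:R + 1 :> R by rewrite -addn1 natrD.
have h2 : (K.+2)%:R = K%:R + 2 :> R by rewrite -addn2 natrD.
have hK : 0 <= K%:R :> R by rewrite ler0n.
rewrite natrM h1 h2; field.
by apply/andP; split; rewrite lt0r_neq0 //; lra.
Qed.

Lemma Psi0 K : (forall k, (0 < size (net k))%N) -> Psi 0 K <= 1.
Proof.
move=> hnet.
have -> : Psi 0 K = \sum_(1 <= k < K.+1) ((k * k.+1)%:R)^-1.
  apply: eq_big_nat => k /andP[hk _].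
  rewrite /wt /= mulr0 expR0.
  under eq_bigr do rewrite mulr1.
  have e : forall (c : R) n, c *+ n = c * n%:R by move=> c n; rewrite mulr_natr.
  rewrite sumr_const_nat subn0 /prior invfM e -mulrA mulVf ?mulr1 //.
  by rewrite pnatr_eq0 -lt0n hnet.
rewrite tele; have : 0 <= (K.+1)%:R^-1 :> R by rewrite invr_ge0 ler0n.
by move=> h; rewrite gerBl.
Qed.

Lemma mu_bd n : -1 <= mu n <= 1.
Proof. exact: predict_bd. Qed.

Lemma pot_step n K : (forall n, -1 <= ys n <= 1) -> (forall k, (0 < size (net k))%N) ->
  (2 ^ n <= K)%N ->
  Psi n.+1 K <= expR (- eta R * (ys n - mu n) ^+ 2) * Psi n K.
Proof.
move=> hy hnet hK.
set y := ys n; set x := xs n; set m := mu n.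
pose b k i := if act n k then ae k i x else m.
have e1 : Psi n.+1 K = \sum_(1 <= k < K.+1) \sum_(0 <= i < size (net k))
    (wt (Vrec n) k i * expR (- eta R * (y - b k i) ^+ 2)).
  apply: eq_bigr => k _; apply: eq_bigr => i _.
  rewrite /wt /= /upd /b /= -/m -/y -/x.
  by case: act; rewrite mulrDr expRD mulrA.
rewrite e1.
set E := expR (- eta R * (y - m) ^+ 2).
have e2 : \sum_(1 <= k < K.+1) \sum_(0 <= i < size (net k))
    (wt (Vrec n) k i * expR (- eta R * (y - b k i) ^+ 2)) <=
  \sum_(1 <= k < K.+1) \sum_(0 <= i < size (net k))
    (E * wt (Vrec n) k i + (E * (2 * eta R * (y - m))) * (wt (Vrec n) k i * (b k i - m))).
  apply: ler_sum => k _; apply: ler_sum => i _.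
  have -> : E * wt (Vrec n) k i + E * (2 * eta R * (y - m)) * (wt (Vrec n) k i * (b k i - m))
    = wt (Vrec n) k i * (E * (1 + 2 * eta R * (y - m) * (b k i - m))) by ring.
  rewrite ler_wpM2l ?wt_ge0 //; apply: key_pt; first exact: hy.
    by rewrite /b; case: act; [exact: ae_bd | exact: mu_bd].
  exact: mu_bd.
apply: (le_trans e2); rewrite sum2_lin.
have e4 : \sum_(1 <= k < K.+1) \sum_(0 <= i < size (net k))
    (wt (Vrec n) k i * (b k i - m)) = 0.
  rewrite (big_cat_nat _ (n := (2 ^ n).+1)) //=.
  have -> : \sum_((2 ^ n).+1 <= k < K.+1) \sum_(0 <= i < size (net k))
      (wt (Vrec n) k i * (b k i - m)) = 0.
    rewrite big1_seq // => k /andP[_]; rewrite mem_index_iota => /andP[hk _].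
    rewrite big1 // => i _; rewrite /b /act.
    have -> : (1 <= k <= 2 ^ n)%N = false by rewrite (ltn_geF hk) andbF.
    by rewrite subrr mulr0.
  rewrite addr0.
  have -> : \sum_(1 <= k < (2 ^ n).+1) \sum_(0 <= i < size (net k))
      (wt (Vrec n) k i * (b k i - m)) =
    \sum_(1 <= k < (2 ^ n).+1) \sum_(0 <= i < size (net k))
      (1 * (wt (Vrec n) k i * ae k i x) + (- m) * wt (Vrec n) k i).
    apply: eq_big_nat => k hk; apply: eq_bigr => i _.
    by rewrite /b /act hk; ring.
  rewrite sum2_lin mul1r -/(Asum (Vrec n) n x) -/(Wsum (Vrec n) n).
  rewrite /m /mu /predict mulNr divfK ?subrr //.
  by rewrite lt0r_neq0 // Wsum_gt0.
by rewrite e4 mulr0 addr0.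
Qed.

Lemma pot K n : (forall n, -1 <= ys n <= 1) -> (forall k, (0 < size (net k))%N) ->
  (2 ^ n <= K)%N -> Psi n K <= expR (- eta R * Lhat n).
Proof.
move=> hy hnet; elim: n => [|n IH] hK.
  by rewrite /Lhat big_ord0 mulr0 expR0; exact: Psi0.
have hK' : (2 ^ n <= K)%N by apply: leq_trans hK; rewrite expnS leq_pmull.
apply: (le_trans (@pot_step n K hy hnet hK')).
rewrite /Lhat big_ord_recr /= -/(Lhat n) mulrDr expRD mulrC.
by rewrite ler_wpM2r ?expR_ge0 // IH.
Qed.

Lemma Vrec_sum n k i : Vrec n k i =
  \sum_(j < n) (if act j k then (ys j - ae k i (xs j)) ^+ 2 else (ys j - mu j) ^+ 2).
Proof.
elim: n => [|n IH]; first by rewrite big_ord0.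
by rewrite big_ord_recr /= -IH.
Qed.

Lemma core K N k i : (forall n, -1 <= ys n <= 1) -> (forall k, (0 < size (net k))%N) ->
  (2 ^ N <= K)%N -> (1 <= k <= K)%N -> (i < size (net k))%N ->
  Lhat N <= Vrec N k i + 32 * ln ((k * k.+1)%:R * (size (net k))%:R).
Proof.
move=> hy hnet hK hk hi.
have h1 : wt (Vrec N) k i <= Psi N K.
  apply: (@nested_ge R (wt (Vrec N)) (fun k => size (net k))) => //.
  exact: wt_ge0.
have h2 := le_trans h1 (@pot K N hy hnet hK).
set P := ((k * k.+1)%:R * (size (net k))%:R : R).
have hP : 0 < P.
  rewrite /P mulr_gt0 // ltr0n ?hnet // muln_gt0 andbT.
  by case/andP: hk.
have e : wt (Vrec N) k i = expR (- ln P + - eta R * Vrec N k i).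
  by rewrite expRD /wt /prior -/P expRN lnK.
rewrite e ler_expR /eta in h2.
lra.
Qed.
End Alg.

Lemma find_k (R : realType) (eps : R) : 0 < eps -> eps <= 2^-1 ->
  exists k, (1 <= k)%N /\ (2:R) ^+ k <= eps^-1 /\ eps^-1 < (2:R) ^+ k.+1.
Proof.
move=> e0 e2.
have hx : 2 <= eps^-1.
  have : (2:R)^-1^-1 <= eps^-1 by rewrite lef_pV2 ?posrE ?invr_gt0.
  by rewrite invrK.
pose P n := eps^-1 < (2:R) ^+ n.
have exP : exists n, P n.
  exists (Num.Def.archi_bound (eps^-1)).
  apply: (lt_le_trans (archi_boundP _)); first by rewrite invr_ge0 ltW.
  rewrite -natrX ler_nat; apply: ltnW; exact: ltn_expl.
case: (ex_minnP exP) => n hPn hmin.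
case: n hPn hmin => [|[|k]] hPn hmin.
- by move: hPn; rewrite /P expr0 => h; exfalso; lra.
- by move: hPn; rewrite /P expr1 => h; exfalso; lra.
exists k.+1; split => //; split => //.
rewrite leNgt; apply/negP => h.
by have := hmin _ h; rewrite ltnn.
Qed.

Lemma count_lt (R : realType) (N n0 : nat) :
  \sum_(j < N) ((j < n0)%N)%:R <= n0%:R :> R.
Proof.
suff : \sum_(j < N) ((j < n0)%N)%:R <= (minn N n0)%:R :> R.
  by move/le_trans; apply; rewrite ler_nat geq_minr.
elim: N => [|N IH]; first by rewrite big_ord0 min0n.
rewrite big_ord_recr /=.
case: (ltnP N n0) => h.
  rewrite (minn_idPl h); move: IH; rewrite (minn_idPl (ltnW h)) => IH.
  by rewrite -addn1 natrD; apply: lerD.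
rewrite addr0; apply: (le_trans IH); rewrite ler_nat.
by rewrite leq_min geq_minr andbT (leq_trans (geq_minl N n0) (leqnSn N)).
Qed.

Lemma sq_le4 (R : realType) (y m : R) : -1 <= y <= 1 -> -1 <= m <= 1 -> (y - m) ^+ 2 <= 4.
Proof. move=> /andP[y1 y2] /andP[m1 m2]; nra. Qed.

Lemma kk_le (R : realType) (k : nat) : (0 < k)%N ->
  ((k * k.+1)%:R : R) <= 2 * k%:R * k%:R.
Proof.
move=> hk; have h : 1 <= k%:R :> R by rewrite ler1n.
rewrite natrM -addn1 natrD; set x := k%:R in h *; nra.
Qed.

Lemma bound_eps (R : realType) (X : topologicalType) (FF : set (X -> R))
  (net : nat -> seq (X -> R)) (xs : nat -> X) (ys : nat -> R) (N : nat) (F : X -> R) (eps : R) :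
  compact (FF : set {uniform X -> R}) ->
  (forall k, eps_net FF ((2:R) ^+ k)^-1 (net k) /\
     forall s', eps_net FF ((2:R) ^+ k)^-1 s' -> (size (net k) <= size s')%N) ->
  (forall k, (0 < size (net k))%N) ->
  (forall n, -1 <= ys n <= 1) -> FF F -> 0 < eps -> eps <= 2^-1 ->
  Lhat R X net xs ys N <= \sum_(j < N) (ys j - F (xs j)) ^+ 2 +
     68 * (metric_entropy FF eps + log2 (log2 eps^-1) + eps * N%:R + 1).
Proof.
move=> cpt hnet hsz hy hF e0 e2.
have [k [hk1 [hk2 hk3]]] := @find_k R eps e0 e2.
set ek := ((2:R) ^+ k)^-1.
have hek0 : 0 < ek by rewrite invr_gt0 exprn_gt0.
have [g gin Fg] := (hnet k).1.2 F hF.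
set i := index g (net k).
have hi : (i < size (net k))%N by rewrite index_mem.
have hgi : nth (fun _ => 0) (net k) i = g by rewrite nth_index.
set K := maxn (2 ^ N) k.
have hcore := @core R X net xs ys K N k i hy hsz (leq_maxl _ _) _ hi.
have {hcore} hcore := hcore (introT andP (conj hk1 (leq_maxr _ _))).
set n0 := up_log 2 k.
have hV : Vrec R X net xs ys N k i <=
    \sum_(j < N) (ys j - F (xs j)) ^+ 2 + 4 * ek * N%:R + 4 * n0%:R.
  rewrite Vrec_sum.
  apply: (@le_trans _ _ (\sum_(j < N) ((ys j - F (xs j)) ^+ 2 + 4 * ek + 4 * ((j < n0)%N)%:R))).
    apply: ler_sum => j _.
    have /andP[y1 y2] := hy j.
    have hj0 : 0 <= ((j < n0)%N)%:R :> R by rewrite ler0n.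
    case: ifP => hact.
      have hc : `|ae R X net k i (xs j) - clip R (F (xs j))| <= ek.
        rewrite /ae hgi; apply: (le_trans (@clip_lip R _ _)); rewrite distrC; exact: Fg (xs j).
      have hl := @clip_loss R (ys j) (F (xs j)) (hy j).
      have /andP[a1 a2] := @ae_bd R X net k i (xs j).
      have /andP[c1 c2] := @clip_bd R (F (xs j)).
      move: hc; rewrite ler_norml => /andP[d1 d2].
      set a := ae R X net k i (xs j) in a1 a2 d1 d2 *.
      set c := clip R (F (xs j)) in hl c1 c2 d1 d2.
      set y := ys j in y1 y2 hl *.
      have e : (y - a) ^+ 2 = (y - c) ^+ 2 + (c - a) * (2 * y - a - c) by ring.
      have hb : (c - a) * (2 * y - a - c) <= ek * 4.
        apply: (le_trans (ler_norm _)); rewrite normrM.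
        apply: ler_pM => //; rewrite ler_norml; apply/andP; split; lra.
      rewrite e in hl *; lra.
    have hj : (j < n0)%N.
      rewrite ltnNge; apply/negP => hjn.
      move/negbT: hact; rewrite /act hk1 /= -ltnNge => hlt.
      have h1 : (k <= 2 ^ n0)%N by exact: up_logP.
      have h2 : (2 ^ n0 <= 2 ^ j)%N by exact: leq_pexp2l.
      by have := leq_ltn_trans (leq_trans h1 h2) hlt; rewrite ltnn.
    rewrite hj /=.
    have /andP[m1 m2] := mu_bd R X net xs ys j.
    have hsq : 0 <= (ys j - F (xs j)) ^+ 2 by exact: sqr_ge0.
    have h4 : (ys j - mu R X net xs ys j) ^+ 2 <= 4.
      by apply: (@sq_le4 R); [exact: hy | rewrite m1 m2].
    lra.
  have e1 : \sum_(j < N) ((ys j - F (xs j)) ^+ 2 + 4 * ek + 4 * ((j < n0)%N)%:R) =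
    \sum_(j < N) (ys j - F (xs j)) ^+ 2 + 4 * ek * N%:R + 4 * \sum_(j < N) ((j < n0)%N)%:R :> R.
    rewrite big_split big_split /= sumr_const card_ord -mulr_sumr (mulr_natr (4 * ek) N).
    by congr (_ + _ + _).
  rewrite e1 lerD2l; apply: ler_wpM2l => //; exact: count_lt.

have hL2 : 0 < ln (2:R) by apply: ln_gt0; lra.
have hL21 : ln (2:R) <= 1.
  have h := expR_ge1Dx (1:R).
  rewrite -[X in _ <= X](expRK 1) ler_ln ?posrE ?expR_gt0 //; lra.
set L2 := ln (2:R) in hL2 hL21 *.
have hkR : 1 <= k%:R :> R by rewrite ler1n.
have hlnk : 0 <= ln (k%:R : R) by apply: ln_ge0.
have hn0N : (2 ^ n0 <= 2 * k)%N.
  case: (ltnP 1 k) => hk.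
    have h1 := up_log_gtn (isT : (1 < 2)%N) hk.
    have h0 : (0 < n0)%N by rewrite up_log_gt0 hk.
    rewrite -(prednK h0) expnS leq_mul2l /=; exact: ltnW.
  have k1 : k = 1%N by apply/eqP; rewrite eqn_leq hk hk1.
  by rewrite /n0 k1 up_log1.
have hn0 : n0%:R * L2 <= L2 + ln (k%:R : R).
  have h : (2:R) ^+ n0 <= 2 * k%:R.
    by rewrite -natrX -natrM ler_nat.
  have := h; rewrite -ler_ln ?posrE ?exprn_gt0 ?mulr_gt0 //; last by lra.
  rewrite lnXn // lnM ?posrE //; last by lra.
  by rewrite mulr_natl.
have hA : k%:R * L2 <= ln (eps^-1).
  have := hk2; rewrite -ler_ln ?posrE ?exprn_gt0 ?invr_gt0 //.
  by rewrite lnXn // mulr_natl.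
set A := log2 (eps^-1).
have hkA : k%:R <= A.
  by rewrite /A /log2 ler_pdivlMr.
have hlnkA : ln (k%:R : R) <= L2 * log2 A.
  rewrite /log2 -/L2 mulrC divfK; last by rewrite gt_eqF.
  rewrite ler_ln ?posrE //; lra.
set LL := log2 A in hlnkA *.
have hek : ek <= 2 * eps.
  have h : (2 * 2 ^+ k)^-1 < eps :> R.
    rewrite -[X in _ < X]invrK ltf_pV2 ?posrE ?invr_gt0 ?mulr_gt0 ?exprn_gt0 //.
    by rewrite -exprS.
  move: h; rewrite invfM -/ek => h.
  have : 2^-1 * ek * 2 <= eps * 2 by rewrite ler_pM2r //; lra.
  rewrite mulrAC mulVf; lra.
have hm1 : 1 <= (size (net k))%:R :> R by rewrite ler1n hsz.
have hlnP : ln ((k * k.+1)%:R * (size (net k))%:R : R) <=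
    L2 + 2 * ln (k%:R : R) + ln ((size (net k))%:R : R).
  rewrite lnM ?posrE ?ltr0n ?muln_gt0 ?hk1 ?hsz //.
  rewrite lerD2r.
  have hkk := @kk_le R k hk1.
  have : ln ((k * k.+1)%:R : R) <= ln (2 * k%:R * k%:R).
    rewrite ler_ln ?posrE ?ltr0n ?muln_gt0 ?hk1 //.
    by rewrite !mulr_gt0 // ltr0n.
  have hk0 : 0 < k%:R :> R by lra.
  rewrite !lnM ?posrE ?ltr0n ?mulr_gt0 ?hk0 //.
  rewrite -/L2 => h; lra.
have hcov : (size (net k))%:R <= covering_number FF eps.
  apply: (@cov_ge R X FF eps ek) => //; last exact: (hnet k).2.
  have h : ek^-1 <= eps^-1 by rewrite /ek invrK.
  by move: h; rewrite lef_pV2 ?posrE.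
have hlnm : ln ((size (net k))%:R : R) <= L2 * metric_entropy FF eps.
  rewrite /metric_entropy /log2 -/L2 mulrC divfK; last by rewrite gt_eqF.
  rewrite ler_ln ?posrE //; lra.
have hlnm0 : 0 <= ln ((size (net k))%:R : R) by apply: ln_ge0.
set H := metric_entropy FF eps in hlnm *.
have hH0 : 0 <= H.
  by rewrite -(pmulr_rge0 _ hL2); lra.
have hLL0 : 0 <= LL.
  by rewrite -(pmulr_rge0 _ hL2); lra.
have hLH : L2 * H <= H by rewrite ler_piMl.
have hLLL : L2 * LL <= LL by rewrite ler_piMl.
have hn0' : n0%:R <= 1 + LL.
  rewrite -(ler_pM2r hL2); lra.
have hNN : 0 <= N%:R :> R by rewrite ler0n.
have hekN : ek * N%:R <= 2 * eps * N%:R by rewrite ler_wpM2r.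
have hepsN : 0 <= eps * N%:R by rewrite mulr_ge0 // ltW.
lra.
Qed.

Theorem theorem2 (R : realType) :
  exists C : R, forall (X : topologicalType), (exists x : X, True) ->
  forall (FF : set (X -> R)),
    (forall F, FF F -> bcont F) ->
    compact (FF : set {uniform X -> R}) ->
  exists S : strategy R X,
    forall (xs : nat -> X) (ys : nat -> R),
      (forall n, -1 <= ys n <= 1) ->
      (forall n, `|prediction S xs ys n| <= 1) /\
      (forall (N : nat), (0 < N)%N -> forall F, FF F ->
        \sum_(n < N) (ys n - prediction S xs ys n) ^+ 2 <=
        \sum_(n < N) (ys n - F (xs n)) ^+ 2 + C * entropy_bound FF N).
Proof.
exists 68 => X _ FF _ cpt.
have [[F0 hF0]|hne] := pselect (exists F, FF F); last first.
  exists (fun _ _ => 0) => xs ys hy; split.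
    by move=> n; rewrite /prediction normr0 ler01.
  by move=> N _ F hF; exfalso; apply: hne; exists F.
have hmin : forall k : nat, exists s, eps_net FF ((2:R) ^+ k)^-1 s /\
    forall s', eps_net FF ((2:R) ^+ k)^-1 s' -> (size s <= size s')%N.
  move=> k; apply: (@min_net R X FF cpt); by rewrite invr_gt0 exprn_gt0.
case: (choice hmin) => net hnet.
have hsz : forall k, (0 < size (net k))%N.
  move=> k; have [g gin _] := (hnet k).1.2 F0 hF0.
  by case: (net k) gin.
exists (strat R X net) => xs ys hy; split.
  by move=> n; rewrite ler_norml pred_eq; apply: predict_bd.
move=> N _ F hF.
have eL : \sum_(n < N) (ys n - prediction (strat R X net) xs ys n) ^+ 2 =
    Lhat R X net xs ys N.
  by apply: eq_bigr => j _; rewrite pred_eq.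
rewrite eL.
suff h : (Lhat R X net xs ys N - \sum_(n < N) (ys n - F (xs n)) ^+ 2) / 68 <=
    entropy_bound FF N by lra.
apply: lb_le_inf.
  exists (metric_entropy FF 2^-1 + log2 (log2 (2^-1)^-1) + 2^-1 * N%:R + 1).
  exists 2^-1 => //; rewrite /= in_itv /=; apply/andP; split => //; lra.
move=> z [eps heps <-].
move: heps; rewrite /= in_itv /= => /andP[e0 e2].
have := @bound_eps R X FF net xs ys N F eps cpt hnet hsz hy hF e0 e2.
lra.
Qed.
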